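(* Let $L$ be the digraph with vertex set $\mathbb{Z}\times\{-1,0,1\}$ in which $((i,x),(j,y))$ is an edge if and only if $j=i+1$ and either $i$ is even, or $i$ is odd and $x+y\neq 0$. Let $\varphi^1,\varphi^2:V(L)\to\mathbb{Z}$ be given by $\varphi^1((i,x))=i$ and $\varphi^2((i,x))=i+1$; both are epimorphisms of $L$ onto the integer-line digraph $Z$. Let $D=L\,{}_{\varphi^1}\!\!\times_{\varphi^2}L$ be the layerwise direct product. Let $K_{3,3}$ be the complete bipartite digraph with all $9$ edges directed from its $3$ initial vertices to its $3$ terminal vertices, and let $AC_6$ be the alternating $6$-cycle, i.e. the bipartite digraph with initial vertices $u_{-1},u_0,u_1$, terminal vertices $w_{-1},w_0,w_1$ and an edge $(u_x,w_y)$ iff $x+y\neq 0$. Let $\psi^1:V(K_{3,3})\to\{0,1\}$ and $\psi^2:V(AC_6)\to\{0,1\}$ both map initial vertices to $0$ and terminal vertices to $1$, and let $K_{3,3}\,{}_{\psi^1}\!\!\times_{\psi^2}AC_6$ be the digraph with vertex set $\{(a,b)\in V(K_{3,3})\times V(AC_6)\mid \psi^1(a)=\psi^2(b)\}$ and edges $((a,b),(a',b'))$ whenever $(a,a')$ is an edge of $K_{3,3}$ and $(b,b')$ is an edge of $AC_6$. Then for every edge $e$ of $D$ the digraph $\Delta(e)$ is, up to isomorphism, independent of $e$, so that the associated digraph $\Delta(D)$ is well defined, and $$\Delta(D)\cong K_{3,3}\,{}_{\psi^1}\!\!\times_{\psi^2}AC_6,$$ and this digraph is connected, $1$-arc transitive,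 bipartite, but not complete bipartite.
   Context: The integer-line digraph is $Z=(\mathbb{Z},\{(i,i+1)\mid i\in\mathbb{Z}\})$. A digraph $G$ has Property $Z$ if there is an epimorphism (surjective digraph homomorphism) $\varphi:G\to Z$. For digraphs $G^1=(V^1,E^1)$, $G^2=(V^2,E^2)$ with epimorphisms $\varphi^1:G^1\to Z$, $\varphi^2:G^2\to Z$, the layerwise direct product $G^1\,{}_{\varphi^1}\!\!\times_{\varphi^2}G^2$ is the digraph with vertex set $\{(x,y)\mid x\in V^1,y\in V^2,\varphi^1(x)=\varphi^2(y)\}$ and edge set $\{((a,b),(x,y))\mid (a,x)\in E^1,(b,y)\in E^2\}$. An $n$-arc is a sequence of directed edges $e_0,\dots,e_{n-1}$ with the terminal vertex of $e_i$ equal to the initial vertex of $e_{i+1}$; a digraph is $n$-arc transitive if its automorphism group acts transitively on its (nonempty set of) $n$-arcs. An alternating walk is a sequence of edges $e_0,\dots,e_{n-1}$ in which consecutive edges alternately share their initial vertex and their terminal vertex (i.e. $e_i,e_{i+1}$ share initial vertex for all even $i$ and share terminal vertex for all odd $i$, or vice versa). Two edges are reachable from each other if some alternating walk contains both; this is an equivalence relation on edges. For an edge $e$, $\Delta(e)$ denotes the subgraph spanned by the reachability class of $e$; when these are all isomorphic, their common isomorphism type is called the associated digraph $\Delta(D)$. *)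

(* Defs.v *)
From Stdlib Require Import ZArith List Relations.
Import ListNotations.
Open Scope Z_scope.

(* A digraph: a carrier type, a vertex set (predicate) and an arc relation.
   All digraphs built below only have arcs between vertices of the vertex set. *)
Record digraph := Digraph {
  vt : Type;
  vset : vt -> Prop;
  arc : vt -> vt -> Prop }.

Definition hom (G H : digraph) (f : vt G -> vt H) : Prop :=
  (forall x, vset G x -> vset H (f x)) /\
  (forall x y, vset G x -> vset G y -> arc G x y -> arc H (f x) (f y)).

Definition epimorphism (G H : digraph) (f : vt G -> vt H) : Prop :=
  hom G H f /\ (forall y, vset H y -> exists x, vset G x /\ f x = y).

Definition iso_map (G H : digraph) (f : vt G -> vt H) : Prop :=
  (forall x, vset G x -> vset H (f x)) /\
  (forall x y, vset G x -> vset G y -> f x = f y -> x = y) /\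
  (forall y, vset H y -> exists x, vset G x /\ f x = y) /\
  (forall x y, vset G x -> vset G y -> (arc G x y <-> arc H (f x) (f y))).

Definition isomorphic (G H : digraph) : Prop := exists f, iso_map G H f.

Definition automorphism (G : digraph) (f : vt G -> vt G) : Prop := iso_map G G f.

Definition Zline : digraph := Digraph Z (fun _ => True) (fun i j => j = i + 1).

Definition lprod (G1 G2 : digraph) (C : Type) (f1 : vt G1 -> C) (f2 : vt G2 -> C)
  : digraph :=
  Digraph (vt G1 * vt G2)
    (fun p => vset G1 (fst p) /\ vset G2 (snd p) /\ f1 (fst p) = f2 (snd p))
    (fun p q =>
       (vset G1 (fst p) /\ vset G2 (snd p) /\ f1 (fst p) = f2 (snd p)) /\
       (vset G1 (fst q) /\ vset G2 (snd q) /\ f1 (fst q) = f2 (snd q)) /\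
       arc G1 (fst p) (fst q) /\ arc G2 (snd p) (snd q)).

Definition is_narc (G : digraph) (n : nat) (s : list (vt G)) : Prop :=
  length s = S n /\ (forall v, In v s -> vset G v) /\
  (forall i u v, nth_error s i = Some u -> nth_error s (S i) = Some v -> arc G u v).

Definition n_arc_transitive (G : digraph) (n : nat) : Prop :=
  (exists s, is_narc G n s) /\
  forall s t, is_narc G n s -> is_narc G n t ->
    exists f, automorphism G f /\ map f s = t.

(* Alternating walks: lists of arcs (as vertex pairs), consecutive arcs alternately
   sharing their initial and their terminal vertex. *)
Definition alt_walk (G : digraph) (w : list (vt G * vt G)) : Prop :=
  w <> [] /\
  (forall e, In e w -> vset G (fst e) /\ vset G (snd e) /\ arc G (fst e) (snd e)) /\
  exists b : bool,
    forall i e f, nth_error w i = Some e -> nth_error w (S i) = Some f ->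
      if xorb b (Nat.even i) then fst e = fst f else snd e = snd f.

Definition reachable (G : digraph) (e f : vt G * vt G) : Prop :=
  exists w, alt_walk G w /\ In e w /\ In f w.

Definition is_edge (G : digraph) (e : vt G * vt G) : Prop :=
  vset G (fst e) /\ vset G (snd e) /\ arc G (fst e) (snd e).

Definition Delta (G : digraph) (e : vt G * vt G) : digraph :=
  Digraph (vt G)
    (fun v => exists f, reachable G e f /\ (v = fst f \/ v = snd f))
    (fun x y => reachable G e (x, y)).

Definition connected (G : digraph) : Prop :=
  (exists v, vset G v) /\
  forall x y, vset G x -> vset G y ->
    clos_refl_trans (vt G) (fun a b => arc G a b \/ arc G b a) x y.

Definition bipartite (G : digraph) : Prop :=
  exists c : vt G -> bool,
    forall x y, vset G x -> vset G y -> arc G x y -> c x <> c y.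

Definition complete_bipartite (G : digraph) : Prop :=
  exists A B : vt G -> Prop,
    (forall v, vset G v -> (A v \/ B v) /\ ~ (A v /\ B v)) /\
    (forall x y, vset G x -> vset G y -> (arc G x y <-> A x /\ B y)).

Inductive T3 := Tm | T0 | Tp.
Definition t3z (x : T3) : Z := match x with Tm => -1 | T0 => 0 | Tp => 1 end.

Definition Ldg : digraph :=
  Digraph (Z * T3) (fun _ => True)
    (fun p q => fst q = fst p + 1 /\
       (Z.even (fst p) = true \/
        (Z.odd (fst p) = true /\ t3z (snd p) + t3z (snd q) <> 0))).

Definition phi1 (p : vt Ldg) : Z := fst p.
Definition phi2 (p : vt Ldg) : Z := fst p + 1.

Definition Ddg : digraph := lprod Ldg Ldg Z phi1 phi2.

(* K_{3,3} and AC_6 on vertices bool * T3 (false = initial, true = terminal) *)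
Definition K33 : digraph :=
  Digraph (bool * T3) (fun _ => True)
    (fun p q => fst p = false /\ fst q = true).

Definition AC6 : digraph :=
  Digraph (bool * T3) (fun _ => True)
    (fun p q => fst p = false /\ fst q = true /\ t3z (snd p) + t3z (snd q) <> 0).

Definition psi (p : bool * T3) : Z := if fst p then 1 else 0.

Definition KxAC : digraph := lprod K33 AC6 Z psi psi.

(* Main.v *)
Require Import Defs.
From Stdlib Require Import ZArith List Relations Lia Bool.
Import ListNotations.
Open Scope Z_scope.

Definition KV := ((bool*T3)*(bool*T3))%type.

Definition t3eqb (a b : T3) : bool :=
  match a, b with Tm,Tm | T0,T0 | Tp,Tp => true | _,_ => false end.
Lemma t3eqb_true a b : t3eqb a b = true -> a = b.
Proof. destruct a, b; simpl; congruence. Qed.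
Lemma t3eqb_refl a : t3eqb a a = true.
Proof. destruct a; reflexivity. Qed.
Lemma t3eqb_false a b : a <> b -> t3eqb a b = false.
Proof. destruct a, b; simpl; congruence. Qed.

Definition veqb (u v : bool*T3) := Bool.eqb (fst u) (fst v) && t3eqb (snd u) (snd v).
Lemma veqb_true u v : veqb u v = true -> u = v.
Proof.
  destruct u as [b x], v as [c y]; unfold veqb; simpl; intro H.
  apply andb_true_iff in H as [H1 H2].
  apply eqb_prop in H1; apply t3eqb_true in H2; subst; reflexivity.
Qed.
Definition kveqb (u v : KV) := veqb (fst u) (fst v) && veqb (snd u) (snd v).
Lemma kveqb_true u v : kveqb u v = true -> u = v.
Proof.
  destruct u as [a b], v as [c d]; unfold kveqb; simpl; intro H.
  apply andb_true_iff in H as [H1 H2].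
  apply veqb_true in H1; apply veqb_true in H2; subst; reflexivity.
Qed.
Definition keeqb (e f : KV*KV) := kveqb (fst e) (fst f) && kveqb (snd e) (snd f).
Lemma keeqb_true e f : keeqb e f = true -> e = f.
Proof.
  destruct e as [a b], f as [c d]; unfold keeqb; simpl; intro H.
  apply andb_true_iff in H as [H1 H2].
  apply kveqb_true in H1; apply kveqb_true in H2; subst; reflexivity.
Qed.

Definition karcb (u v : KV) : bool :=
  match u, v with
  | ((b,_),(b',x)), ((c,_),(c',y)) =>
      negb b && negb b' && c && c' && negb (t3z x + t3z y =? 0)
  end.

Lemma karcb_spec u v : karcb u v = true ->
  exists a x a' y, u = ((false,a),(false,x)) /\ v = ((true,a'),(true,y)) /\
    t3z x + t3z y <> 0.
Proof.
  destruct u as [[b a][b' x]], v as [[c a'][c' y]]; simpl; intro H.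
  repeat rewrite andb_true_iff in H. destruct H as [[[[H1 H2] H3] H4] H5].
  apply negb_true_iff in H1, H2, H5. apply Z.eqb_neq in H5. subst.
  exists a, x, a', y; auto.
Qed.

Lemma karcb_arc u v : karcb u v = true -> arc KxAC u v.
Proof.
  intro H; apply karcb_spec in H as (a & x & a' & y & -> & -> & H).
  unfold KxAC, lprod, K33, AC6; simpl. unfold psi; simpl. tauto.
Qed.

Lemma arc_karcb u v : arc KxAC u v -> karcb u v = true.
Proof.
  destruct u as [[b a][b' x]], v as [[c a'][c' y]].
  unfold KxAC, lprod, K33, AC6; simpl.
  intros (_ & _ & [H1 H2] & [H3 [H4 H5]]); subst; simpl.
  apply negb_true_iff, Z.eqb_neq; exact H5.
Qed.

Lemma arc_iff u v : arc KxAC u v <-> karcb u v = true.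
Proof. split; [apply arc_karcb | apply karcb_arc]. Qed.

Lemma vset_KxAC p : vset KxAC p <-> fst (fst p) = fst (snd p).
Proof.
  destruct p as [[b a][c x]]; unfold KxAC, lprod, K33, AC6, psi; simpl.
  destruct b, c; intuition discriminate.
Qed.

Definition RK := fun a b : vt KxAC => arc KxAC a b \/ arc KxAC b a.

Lemma crt_sym (X : Type) (R : X -> X -> Prop) :
  (forall a b, R a b -> R b a) ->
  forall a b, clos_refl_trans X R a b -> clos_refl_trans X R b a.
Proof.
  intros Hs a b H; induction H.
  - apply rt_step; auto.
  - apply rt_refl.
  - eapply rt_trans; eauto.
Qed.

Definition wpK : KV := ((true,T0),(true,Tp)).
Definition wmK : KV := ((true,T0),(true,Tm)).
Definition u0K : KV := ((false,T0),(false,T0)).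

Ltac fw := apply rt_step; left; apply karcb_arc; reflexivity.
Ltac bw := apply rt_step; right; apply karcb_arc; reflexivity.

Lemma hub p : vset KxAC p -> clos_refl_trans (vt KxAC) RK p wpK.
Proof.
  intro H; apply vset_KxAC in H.
  destruct p as [[b a][c x]]; simpl in H; subst c.
  assert (Hw : clos_refl_trans (vt KxAC) RK wmK wpK).
  { apply rt_trans with u0K; [bw | fw]. }
  destruct b, a, x;
  first [ fw
        | apply rt_trans with ((false,T0),(false,Tp)); [bw | fw]
        | apply rt_trans with wmK; [fw | exact Hw]
        | apply rt_trans with ((false,T0),(false,Tm)); [bw|];
          apply rt_trans with wmK; [fw | exact Hw] ].
Qed.

Lemma KxAC_connected : connected KxAC.
Proof.
  split.
  - exists u0K; apply vset_KxAC; reflexivity.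
  - intros x y Hx Hy. apply rt_trans with wpK; [apply hub; auto|].
    apply crt_sym; [unfold RK; tauto | apply hub; auto].
Qed.

Lemma KxAC_bipartite : bipartite KxAC.
Proof.
  exists (fun p => fst (fst p)). intros x y _ _ H.
  apply arc_karcb, karcb_spec in H as (a & u & a' & v & -> & -> & _).
  simpl; discriminate.
Qed.

Lemma KxAC_not_cb : ~ complete_bipartite KxAC.
Proof.
  intros (A & B & HP & Ha).
  set (u0 := ((false,T0),(false,T0)) : vt KxAC).
  set (w0 := ((true,T0),(true,Tp)) : vt KxAC).
  set (u1 := ((false,T0),(false,Tp)) : vt KxAC).
  set (w1 := ((true,T0),(true,Tm)) : vt KxAC).
  assert (V : forall p : vt KxAC, fst (fst p) = fst (snd p) -> vset KxAC p)
    by (intros; apply vset_KxAC; auto).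
  assert (H1 : A u0 /\ B w0) by (apply Ha; try apply V; try reflexivity; apply karcb_arc; reflexivity).
  assert (H2 : A u1 /\ B w0) by (apply Ha; try apply V; try reflexivity; apply karcb_arc; reflexivity).
  assert (H3 : A u0 /\ B w1) by (apply Ha; try apply V; try reflexivity; apply karcb_arc; reflexivity).
  assert (H4 : arc KxAC u1 w1) by (apply Ha; try apply V; try reflexivity; tauto).
  apply arc_karcb in H4. discriminate.
Qed.

Definition tneg (a : T3) : T3 := match a with Tm => Tp | T0 => T0 | Tp => Tm end.
Definition tr (a b p : T3) : T3 := if t3eqb p a then b else if t3eqb p b then a else p.
Definition third (a b : T3) : T3 :=
  match a, b with
  | Tm, T0 | T0, Tm => Tp
  | Tm, Tp | Tp, Tm => T0
  | _, _ => Tm end.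
Definition perm2 (x z x2 z2 p : T3) : T3 :=
  if t3eqb p x then x2 else if t3eqb p z then z2 else third x2 z2.

Lemma tr_inv a b p : tr a b (tr a b p) = p.
Proof. destruct a, b, p; reflexivity. Qed.
Lemma tneg_inv p : tneg (tneg p) = p.
Proof. destruct p; reflexivity. Qed.
Lemma perm2_inv x z x2 z2 p : x <> z -> x2 <> z2 ->
  perm2 x z x2 z2 (perm2 x2 z2 x z p) = p.
Proof.
  intros H1 H2; destruct x, z; try congruence; destruct x2, z2; try congruence;
  destruct p; reflexivity.
Qed.
Lemma perm2_ac x z x2 z2 p q : x <> z -> x2 <> z2 ->
  (t3z (perm2 x z x2 z2 p) + t3z (tneg (perm2 x z x2 z2 (tneg q))) =? 0) =
  (t3z p + t3z q =? 0).
Proof.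
  intros H1 H2; destruct x, z; try congruence; destruct x2, z2; try congruence;
  destruct p, q; reflexivity.
Qed.

Definition Fm (a b a' b' x z x2 z2 : T3) (p : KV) : KV :=
  match p with ((c,p1),(d,q1)) =>
    ((c, if c then tr a' b' p1 else tr a b p1),
     (d, if d then tneg (perm2 x z x2 z2 (tneg q1)) else perm2 x z x2 z2 q1))
  end.

Lemma Fm_inv a b a' b' x z x2 z2 p : x <> z -> x2 <> z2 ->
  Fm a b a' b' x z x2 z2 (Fm a b a' b' x2 z2 x z p) = p.
Proof.
  intros H1 H2; destruct p as [[c p1][d q1]]; destruct c, d; simpl;
  rewrite ?tr_inv, ?tneg_inv, ?perm2_inv, ?tneg_inv; auto.
Qed.

Lemma Fm_karcb a b a' b' x z x2 z2 p q : x <> z -> x2 <> z2 ->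
  karcb (Fm a b a' b' x z x2 z2 p) (Fm a b a' b' x z x2 z2 q) = karcb p q.
Proof.
  intros H1 H2; destruct p as [[c p1][d q1]], q as [[c' p2][d' q2]];
  destruct c, d, c', d'; simpl; try reflexivity.
  rewrite perm2_ac; auto.
Qed.

Lemma Fm_fst a b a' b' x z x2 z2 p :
  fst (fst (Fm a b a' b' x z x2 z2 p)) = fst (fst p) /\
  fst (snd (Fm a b a' b' x z x2 z2 p)) = fst (snd p).
Proof. destruct p as [[c p1][d q1]]; simpl; auto. Qed.

Lemma Fm_auto a b a' b' x z x2 z2 : x <> z -> x2 <> z2 ->
  automorphism KxAC (Fm a b a' b' x z x2 z2).
Proof.
  intros H1 H2. unfold automorphism, iso_map. split; [|split; [|split]].
  - intros p Hp; apply vset_KxAC in Hp; apply vset_KxAC.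
    destruct p as [[c p1][d q1]]; simpl in *; auto.
  - intros p q _ _ E.
    rewrite <- (Fm_inv a b a' b' x2 z2 x z p), <- (Fm_inv a b a' b' x2 z2 x z q) by auto.
    rewrite E; reflexivity.
  - intros q Hq. exists (Fm a b a' b' x2 z2 x z q). split.
    + apply vset_KxAC in Hq; apply vset_KxAC.
      destruct q as [[c p1][d q1]]; simpl in *; auto.
    + apply Fm_inv; auto.
  - intros p q _ _. rewrite !arc_iff, Fm_karcb by auto. tauto.
Qed.

Lemma neq_tneg x y : t3z x + t3z y <> 0 -> x <> tneg y.
Proof. destruct x, y; simpl; intros H E; try discriminate E; lia. Qed.

Lemma narc1 s : is_narc KxAC 1 s ->
  exists a x a' y, s = [((false,a),(false,x)); ((true,a'),(true,y))] /\
    t3z x + t3z y <> 0.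
Proof.
  intros (HL & _ & Ha).
  destruct s as [|u [|v [|w s]]]; simpl in HL; try discriminate.
  specialize (Ha 0%nat u v eq_refl eq_refl).
  apply arc_karcb, karcb_spec in Ha as (a & x & a' & y & -> & -> & H).
  exists a, x, a', y; auto.
Qed.

Lemma KxAC_arc_trans : n_arc_transitive KxAC 1.
Proof.
  split.
  - exists [u0K; wpK]. split; [reflexivity | split].
    + simpl; intros v [H|[H|[]]]; subst; apply vset_KxAC; reflexivity.
    + intros [|[|i]] u v Hu Hv; simpl in Hu, Hv; try discriminate.
      injection Hu; injection Hv; intros; subst; apply karcb_arc; reflexivity.
  - intros s t Hs Ht.
    apply narc1 in Hs as (a & x & a' & y & -> & H1).
    apply narc1 in Ht as (b & x2 & b' & y2 & -> & H2).
    exists (Fm a b a' b' x (tneg y) x2 (tneg y2)). split.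
    + apply Fm_auto; apply neq_tneg; auto.
    + simpl. unfold tr, perm2. rewrite !t3eqb_refl.
      rewrite (t3eqb_false (tneg y) x) by (intro E; apply (neq_tneg x y); auto).
      rewrite tneg_inv. reflexivity.
Qed.

Definition DV := ((Z*T3)*(Z*T3))%type.

Definition emb (i : Z) (u : KV) : DV :=
  match u with ((b,a),(_,x)) =>
    if Z.even i then ((if b then i+1 else i, a),(if b then i else i-1, x))
    else ((if b then i+1 else i, x),(if b then i else i-1, a)) end.

Definition fmap (i : Z) (v : DV) : KV :=
  match v with ((k,p),(_,q)) =>
    let b := Z.eqb k (i+1) in
    if Z.even i then ((b,p),(b,q)) else ((b,q),(b,p)) end.

Definition layer (g : vt Ddg * vt Ddg) : Z := fst (fst (fst g)).

Lemma even_m1 k : Z.even (k-1) = negb (Z.even k).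
Proof. rewrite Z.sub_1_r, Z.even_pred, Z.negb_even. reflexivity. Qed.
Lemma odd_e k : Z.odd k = negb (Z.even k).
Proof. rewrite Z.negb_even. reflexivity. Qed.

Lemma edge_char (g : DV*DV) : is_edge Ddg g ->
  exists i x y x' y', g = (((i,x),(i-1,y)),((i+1,x'),(i,y'))) /\
    (if Z.even i then t3z y + t3z y' <> 0 else t3z x + t3z x' <> 0).
Proof.
  destruct g as [[[k x][l y]] [[k' x'][l' y']]].
  unfold is_edge, Ddg, lprod, Ldg, phi1, phi2; simpl.
  intros (_ & _ & (_ & _ & E1) & (_ & _ & E2) & [A1 B1] & [A2 B2]).
  assert (l = k-1) by lia. assert (k' = k+1) by lia. assert (l' = k) by lia. subst l k' l'.
  exists k, x, y, x', y'. split; [repeat f_equal; lia|].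
  rewrite odd_e, even_m1 in *.
  destruct (Z.even k); simpl in *.
  - destruct B2 as [B2|[_ B2]]; [discriminate|exact B2].
  - destruct B1 as [B1|[_ B1]]; [discriminate|exact B1].
Qed.

Lemma edge_of_k i u v : karcb u v = true ->
  is_edge Ddg (emb i u, emb i v) /\ layer (emb i u, emb i v) = i.
Proof.
  intro H; apply karcb_spec in H as (a & x & a' & y & -> & -> & H).
  unfold is_edge, Ddg, lprod, Ldg, phi1, phi2, layer, emb; simpl.
  destruct (Z.even i) eqn:E; simpl.
  - split; [|reflexivity].
    repeat split; try lia. left; exact E.
    right; split; [rewrite odd_e, even_m1, E; reflexivity|]. lia.
  - split; [|reflexivity].
    repeat split; try lia. right; split; [rewrite odd_e, E; reflexivity | lia].
    left; rewrite even_m1, E; reflexivity.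
Qed.

Lemma fmap_emb i u : vset KxAC u -> fmap i (emb i u) = u.
Proof.
  intro H; apply vset_KxAC in H.
  destruct u as [[b a][c x]]; simpl in H; subst c.
  assert (E1 : Z.eqb i (i+1) = false) by (apply Z.eqb_neq; lia).
  unfold emb, fmap.
  destruct (Z.even i) eqn:E, b; rewrite ?E1, ?Z.eqb_refl, ?E; reflexivity.
Qed.

Definition LV (i : Z) (v : DV) : Prop :=
  exists p q, v = ((i,p),(i-1,q)) \/ v = ((i+1,p),(i,q)).

Lemma emb_fmap i v : LV i v -> emb i (fmap i v) = v.
Proof.
  intros (p & q & [-> | ->]);
  assert (E1 : Z.eqb i (i+1) = false) by (apply Z.eqb_neq; lia);
  unfold emb, fmap; destruct (Z.even i) eqn:E; rewrite ?E1, ?Z.eqb_refl, ?E; reflexivity.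
Qed.

Lemma fmap_vset i v : vset KxAC (fmap i v).
Proof.
  apply vset_KxAC; destruct v as [[k p][l q]]; unfold fmap; destruct (Z.even i); reflexivity.
Qed.

Definition Wk : list (KV*KV) := [(((false,Tm),(false,Tm)),((true,Tp),(true,T0)));
  (((false,Tp),(false,Tp)),((true,Tp),(true,T0)));
  (((false,Tp),(false,Tp)),((true,Tp),(true,Tp)));
  (((false,Tp),(false,T0)),((true,Tp),(true,Tp)));
  (((false,Tp),(false,T0)),((true,Tp),(true,Tm)));
  (((false,Tp),(false,Tm)),((true,Tp),(true,Tm)));
  (((false,Tp),(false,Tm)),((true,T0),(true,T0)));
  (((false,Tp),(false,Tp)),((true,T0),(true,T0)));
  (((false,Tp),(false,Tp)),((true,T0),(true,Tp)));
  (((false,Tp),(false,T0)),((true,T0),(true,Tp)));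
  (((false,Tp),(false,T0)),((true,T0),(true,Tm)));
  (((false,Tp),(false,Tm)),((true,T0),(true,Tm)));
  (((false,Tp),(false,Tm)),((true,Tm),(true,T0)));
  (((false,Tp),(false,Tp)),((true,Tm),(true,T0)));
  (((false,Tp),(false,Tp)),((true,Tm),(true,Tp)));
  (((false,Tp),(false,T0)),((true,Tm),(true,Tp)));
  (((false,Tp),(false,T0)),((true,Tm),(true,Tm)));
  (((false,Tp),(false,Tm)),((true,Tm),(true,Tm)));
  (((false,Tp),(false,Tm)),((true,Tp),(true,T0)));
  (((false,T0),(false,Tp)),((true,Tp),(true,T0)));
  (((false,T0),(false,Tp)),((true,Tp),(true,Tp)));
  (((false,T0),(false,T0)),((true,Tp),(true,Tp)));
  (((false,T0),(false,T0)),((true,Tp),(true,Tm)));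
  (((false,T0),(false,Tm)),((true,Tp),(true,Tm)));
  (((false,T0),(false,Tm)),((true,T0),(true,T0)));
  (((false,T0),(false,Tp)),((true,T0),(true,T0)));
  (((false,T0),(false,Tp)),((true,T0),(true,Tp)));
  (((false,T0),(false,T0)),((true,T0),(true,Tp)));
  (((false,T0),(false,T0)),((true,T0),(true,Tm)));
  (((false,T0),(false,Tm)),((true,T0),(true,Tm)));
  (((false,T0),(false,Tm)),((true,Tm),(true,T0)));
  (((false,T0),(false,Tp)),((true,Tm),(true,T0)));
  (((false,T0),(false,Tp)),((true,Tm),(true,Tp)));
  (((false,T0),(false,T0)),((true,Tm),(true,Tp)));
  (((false,T0),(false,T0)),((true,Tm),(true,Tm)));
  (((false,T0),(false,Tm)),((true,Tm),(true,Tm)));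
  (((false,T0),(false,Tm)),((true,Tp),(true,T0)));
  (((false,Tm),(false,Tp)),((true,Tp),(true,T0)));
  (((false,Tm),(false,Tp)),((true,Tp),(true,Tp)));
  (((false,Tm),(false,T0)),((true,Tp),(true,Tp)));
  (((false,Tm),(false,T0)),((true,Tp),(true,Tm)));
  (((false,Tm),(false,Tm)),((true,Tp),(true,Tm)));
  (((false,Tm),(false,Tm)),((true,T0),(true,T0)));
  (((false,Tm),(false,Tp)),((true,T0),(true,T0)));
  (((false,Tm),(false,Tp)),((true,T0),(true,Tp)));
  (((false,Tm),(false,T0)),((true,T0),(true,Tp)));
  (((false,Tm),(false,T0)),((true,T0),(true,Tm)));
  (((false,Tm),(false,Tm)),((true,T0),(true,Tm)));
  (((false,Tm),(false,Tm)),((true,Tm),(true,T0)));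
  (((false,Tm),(false,Tp)),((true,Tm),(true,T0)));
  (((false,Tm),(false,Tp)),((true,Tm),(true,Tp)));
  (((false,Tm),(false,T0)),((true,Tm),(true,Tp)));
  (((false,Tm),(false,T0)),((true,Tm),(true,Tm)));
  (((false,Tm),(false,Tm)),((true,Tm),(true,Tm)))].

Lemma Wk_arcs : forallb (fun e => karcb (fst e) (snd e)) Wk = true.
Proof. vm_compute. reflexivity. Qed.

Fixpoint alt_ok (b : bool) (n : nat) (l : list (KV*KV)) : bool :=
  match l with
  | e :: ((f :: _) as l') =>
      (if xorb b (Nat.even n) then kveqb (fst e) (fst f) else kveqb (snd e) (snd f))
      && alt_ok b (S n) l'
  | _ => true
  end.

Lemma alt_ok_spec b l : forall n, alt_ok b n l = true ->
  forall i e f, nth_error l i = Some e -> nth_error l (S i) = Some f ->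
    if xorb b (Nat.even (n + i)) then fst e = fst f else snd e = snd f.
Proof.
  induction l as [|a l IH]; intros n H i e f He Hf.
  - destruct i; discriminate.
  - destruct l as [|c l'].
    + destruct i; simpl in Hf; [discriminate|destruct i; discriminate].
    + simpl in H. apply andb_true_iff in H as [H1 H2].
      destruct i as [|i].
      * simpl in He, Hf. injection He; injection Hf; intros; subst.
        rewrite Nat.add_0_r. destruct (xorb b (Nat.even n));
        apply kveqb_true; auto.
      * rewrite Nat.add_succ_r. apply (IH (S n) H2 i); auto.
Qed.

Lemma Wk_alt : alt_ok true 0 Wk = true.
Proof. vm_compute. reflexivity. Qed.

Lemma Wk_cover a x a' y : t3z x + t3z y <> 0 ->
  In (((false,a),(false,x)),((true,a'),(true,y))) Wk.
Proof.
  intro H.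
  assert (G : forall e, existsb (keeqb e) Wk = true -> In e Wk).
  { intros e He. apply existsb_exists in He as (f & Hf & E).
    apply keeqb_true in E; subst; auto. }
  apply G. destruct a, x, a', y; simpl in H; try lia; vm_compute; reflexivity.
Qed.

Definition embE (i : Z) (c : KV*KV) : vt Ddg * vt Ddg := (emb i (fst c), emb i (snd c)).
Definition Wi (i : Z) : list (vt Ddg * vt Ddg) := map (embE i) Wk.

Lemma Wi_walk i : alt_walk Ddg (Wi i).
Proof.
  split; [|split].
  - unfold Wi, Wk; simpl; discriminate.
  - intros e He. unfold Wi in He. apply in_map_iff in He as (c & <- & Hc).
    assert (Hk : karcb (fst c) (snd c) = true)
      by (apply (proj1 (forallb_forall _ Wk) Wk_arcs c Hc)).
    apply (edge_of_k i) in Hk as [Hk _]. exact Hk.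
  - exists true. intros n e f He Hf. unfold Wi in He, Hf.
    rewrite nth_error_map in He, Hf.
    destruct (nth_error Wk n) as [c|] eqn:Ec; [|discriminate].
    destruct (nth_error Wk (S n)) as [d|] eqn:Ed; [|discriminate].
    simpl in He, Hf. injection He; injection Hf; intros; subst.
    pose proof (alt_ok_spec true Wk 0 Wk_alt n c d Ec Ed) as A. change (0+n)%nat with n in A.
    unfold embE; destruct (xorb true (Nat.even n)); simpl; rewrite A; reflexivity.
Qed.

Lemma in_Wi (g : DV*DV) : is_edge Ddg g -> In g (Wi (layer g)).
Proof.
  intro H; apply edge_char in H as (i & x & y & x' & y' & -> & C).
  unfold Wi, layer; cbn [fst]; apply in_map_iff.
  assert (E1 : Z.eqb i (i+1) = false) by (apply Z.eqb_neq; lia).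
  destruct (Z.even i) eqn:E.
  - exists (((false,x),(false,y)),((true,x'),(true,y'))). split.
    + unfold embE, emb; simpl; rewrite E; reflexivity.
    + apply Wk_cover; auto.
  - exists (((false,y),(false,x)),((true,y'),(true,x'))). split.
    + unfold embE, emb; simpl; rewrite E; reflexivity.
    + apply Wk_cover; auto.
Qed.

Lemma R2 (e g : vt Ddg * vt Ddg) : is_edge Ddg e -> is_edge Ddg g -> layer g = layer e ->
  reachable Ddg e g.
Proof.
  intros He Hg L. exists (Wi (layer e)). split; [apply Wi_walk|split].
  - apply in_Wi; auto.
  - rewrite <- L; apply in_Wi; auto.
Qed.

Lemma edge_layer_snd (g : vt Ddg * vt Ddg) : is_edge Ddg g -> fst (fst (snd g)) = layer g + 1.
Proof.
  intro H; apply edge_char in H as (i & x & y & x' & y' & -> & _); reflexivity.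
Qed.

Lemma walk_layer w : alt_walk Ddg w -> forall h0, nth_error w 0 = Some h0 ->
  forall n h, nth_error w n = Some h -> layer h = layer h0 /\ is_edge Ddg h.
Proof.
  intros (_ & HE & b & HA) h0 H0 n. induction n as [|n IH]; intros h' Hh'.
  - rewrite H0 in Hh'; injection Hh'; intros; subst. split; auto.
    apply HE; eapply nth_error_In; eauto.
  - destruct (nth_error w n) as [h|] eqn:Eh.
    + destruct (IH h eq_refl) as [L1 Eh1].
      assert (Eh2 : is_edge Ddg h') by (apply HE; eapply nth_error_In; eauto).
      split; auto. rewrite <- L1.
      specialize (HA n h h' Eh Hh').
      destruct (xorb b (Nat.even n)).
      * unfold layer; rewrite HA; reflexivity.
      * pose proof (edge_layer_snd h Eh1). pose proof (edge_layer_snd h' Eh2).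
        assert (fst (fst (snd h)) = fst (fst (snd h'))) by (rewrite HA; reflexivity). lia.
    + apply nth_error_None in Eh.
      assert (nth_error w (S n) = None) by (apply nth_error_None; lia). congruence.
Qed.

Lemma R1 (e g : vt Ddg * vt Ddg) : reachable Ddg e g -> is_edge Ddg g /\ layer g = layer e.
Proof.
  intros (w & Hw & Ie & Ig).
  destruct w as [|h0 w']; [destruct Hw; congruence|].
  apply In_nth_error in Ie as (n1 & E1). apply In_nth_error in Ig as (n2 & E2).
  destruct (walk_layer _ Hw h0 eq_refl n1 e E1) as [L1 _].
  destruct (walk_layer _ Hw h0 eq_refl n2 g E2) as [L2 G2].
  split; auto; congruence.
Qed.

Lemma delta_vset (e : vt Ddg * vt Ddg) v : vset (Delta Ddg e) v -> LV (layer e) v.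
Proof.
  intros (f & Hr & Hv). apply R1 in Hr as [Hf L].
  rewrite <- L. apply edge_char in Hf as (i & x & y & x' & y' & Ef & _).
  rewrite Ef in Hv |- *. unfold layer; simpl.
  destruct Hv as [-> | ->]; [exists x, y; left | exists x', y'; right]; reflexivity.
Qed.

Lemma emb_in_delta (e : vt Ddg * vt Ddg) y : is_edge Ddg e -> vset KxAC y ->
  vset (Delta Ddg e) (emb (layer e) y).
Proof.
  intros He Hy. apply vset_KxAC in Hy.
  assert (Hk : exists u v, karcb u v = true /\ (y = u \/ y = v)).
  { destruct y as [[b a][c x]]; simpl in Hy; subst c.
    destruct b, x;
    first [ exists ((false,T0),(false,Tp)); eexists; split; [|right; reflexivity]; reflexivity
          | exists ((false,T0),(false,Tm)); eexists; split; [|right; reflexivity]; reflexivity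
          | eexists; exists ((true,T0),(true,Tp)); split; [|left; reflexivity]; reflexivity
          | eexists; exists ((true,T0),(true,Tm)); split; [|left; reflexivity]; reflexivity ]. }
  destruct Hk as (u & v & Huv & Hyuv).
  destruct (edge_of_k (layer e) u v Huv) as [Hg L].
  exists (emb (layer e) u, emb (layer e) v). split.
  - apply R2; auto.
  - simpl. destruct Hyuv as [-> | ->]; auto.
Qed.

Lemma delta_iso (e : vt Ddg * vt Ddg) : is_edge Ddg e ->
  iso_map (Delta Ddg e) KxAC (fmap (layer e)).
Proof.
  intro He. remember (layer e) as i eqn:Ei.
  split; [|split; [|split]].
  - intros; apply fmap_vset.
  - intros x y Hx Hy E. apply delta_vset in Hx, Hy. rewrite <- Ei in Hx, Hy.
    rewrite <- (emb_fmap i x Hx), <- (emb_fmap i y Hy), E; reflexivity.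
  - intros y Hy. exists (emb i y). split.
    + rewrite Ei; apply emb_in_delta; auto.
    + apply fmap_emb; auto.
  - intros x y Hx Hy. apply delta_vset in Hx, Hy. rewrite <- Ei in Hx, Hy. split.
    + intro Hr. apply R1 in Hr as [Hxy L].
      apply edge_char in Hxy as (i0 & p & q & p' & q' & Exy & C).
      injection Exy; intros Ey Ex. unfold layer in L; rewrite Exy in L; simpl in L.
      assert (i0 = i) by (rewrite Ei; unfold layer; exact L). subst x y i0.
      assert (E1 : Z.eqb i (i+1) = false) by (apply Z.eqb_neq; lia).
      apply arc_iff. unfold fmap; simpl. rewrite H in C |- *. rewrite E1, Z.eqb_refl.
      destruct (Z.even i); simpl; apply negb_true_iff, Z.eqb_neq; exact C.
    + intro Ha. apply arc_iff in Ha.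
      destruct (edge_of_k i _ _ Ha) as [Hg L].
      rewrite (emb_fmap i x Hx), (emb_fmap i y Hy) in Hg, L.
      apply R2; auto. transitivity i; [exact L | exact Ei].
Qed.

Lemma iso_inv (G H : digraph) f g : iso_map G H f ->
  (forall y, vset H y -> vset G (g y) /\ f (g y) = y) -> iso_map H G g.
Proof.
  intros (F1 & F2 & F3 & F4) Hg. split; [|split; [|split]].
  - intros y Hy; apply Hg; auto.
  - intros y1 y2 H1 H2 E.
    destruct (Hg y1 H1) as [_ <-]; destruct (Hg y2 H2) as [_ <-]; rewrite E; auto.
  - intros x Hx. exists (f x). split; auto.
    destruct (Hg (f x) (F1 x Hx)) as [A B]. apply F2; auto.
  - intros y1 y2 H1 H2.
    destruct (Hg y1 H1) as [A1 B1]; destruct (Hg y2 H2) as [A2 B2].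
    rewrite (F4 _ _ A1 A2), B1, B2. tauto.
Qed.

Lemma iso_comp (G H K : digraph) f g : iso_map G H f -> iso_map H K g ->
  iso_map G K (fun x => g (f x)).
Proof.
  intros (F1 & F2 & F3 & F4) (G1 & G2 & G3 & G4). split; [|split; [|split]].
  - auto.
  - intros x y Hx Hy E. apply F2; auto.
  - intros z Hz. destruct (G3 z Hz) as (y & Hy & <-).
    destruct (F3 y Hy) as (x & Hx & <-). eauto.
  - intros x y Hx Hy. rewrite (F4 _ _ Hx Hy). apply G4; auto.
Qed.

Lemma epi1 : epimorphism Ldg Zline phi1.
Proof.
  split; [split|].
  - simpl; auto.
  - intros [i x] [j y] _ _ [H _]; simpl in *; unfold phi1; simpl; lia.
  - intros y _. exists (y, T0); simpl; auto.
Qed.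

Lemma epi2 : epimorphism Ldg Zline phi2.
Proof.
  split; [split|].
  - simpl; auto.
  - intros [i x] [j y] _ _ [H _]; simpl in *; unfold phi2; simpl; lia.
  - intros y _. exists (y - 1, T0); split; simpl; auto; unfold phi2; simpl; lia.
Qed.

Theorem mainTheorem1 :
  epimorphism Ldg Zline phi1 /\ epimorphism Ldg Zline phi2 /\
  (forall e1 e2 : vt Ddg * vt Ddg, is_edge Ddg e1 -> is_edge Ddg e2 ->
     isomorphic (Delta Ddg e1) (Delta Ddg e2)) /\
  (forall e : vt Ddg * vt Ddg, is_edge Ddg e -> isomorphic (Delta Ddg e) KxAC) /\
  connected KxAC /\ n_arc_transitive KxAC 1 /\ bipartite KxAC /\
  ~ complete_bipartite KxAC.
Proof.
  split; [exact epi1|]. split; [exact epi2|]. split; [|split; [|split; [|split; [|split]]]].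
  - intros e1 e2 H1 H2. eexists. apply (iso_comp _ KxAC (Delta Ddg e2) _ (emb (layer e2)) (delta_iso e1 H1)).
    apply (iso_inv (Delta Ddg e2) KxAC _ (emb (layer e2)) (delta_iso e2 H2)).
    intros y Hy. split; [apply emb_in_delta; auto | apply fmap_emb; auto].
  - intros e He. eexists; apply delta_iso; auto.
  - exact KxAC_connected.
  - exact KxAC_arc_trans.
  - exact KxAC_bipartite.
  - exact KxAC_not_cb.
Qed.
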